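(* For every positive integer $n$, let $\rho(n)$ denote the maximum number of runs in a binary word of length $n$. Then the limit $\lim_{n\to\infty}\rho(n)/n$ exists (as a finite real number).
   Context: Words are finite sequences $w=w[1]w[2]\cdots w[n]$ over the binary alphabet $\{0,1\}$, $|w|=n$, and $w[i..j]=w[i]w[i+1]\cdots w[j]$. An integer $p\ge 1$ is a period of $w$ if $w[i+p]=w[i]$ for all $1\le i\le |w|-p$; the period of $w$ is its least period. A run of $w$ is an integer interval $[i..j]$ with $1\le i<j\le |w|$ such that, with $p$ the least period of $w[i..j]$, we have $j-i+1\ge 2p$, and either $i=1$ or $w[i-1]\neq w[i-1+p]$, and either $j=|w|$ or $w[j+1]\ne w[j+1-p]$. *)

(* Defs.v *)
From mathcomp Require Import all_boot.
Set Implicit Arguments. Unset Strict Implicit. Unset Printing Implicit Defensive.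

(* Binary words are seq bool; the paper's 1-based letter w[k] is
   [letter w k] = nth false w (k-1). *)
Definition letter (w : seq bool) (k : nat) : bool := nth false w k.-1.

(* w[i..j] (1-based, inclusive) *)
Definition factor (w : seq bool) (i j : nat) : seq bool :=
  take (j - i + 1) (drop i.-1 w).

Definition is_period (u : seq bool) (p : nat) : bool :=
  (1 <= p) && [forall k : 'I_(size u), (k + p < size u) ==>
                  (letter u (k + 1 + p) == letter u (k + 1))].

Definition is_least_period (u : seq bool) (p : nat) : bool :=
  is_period u p && [forall q : 'I_p, ~~ is_period u q].

Definition is_run (w : seq bool) (i j : nat) : bool :=
  [&& 1 <= i, i < j, j <= size w &
   [exists p : 'I_(size w).+1,
      [&& is_least_period (factor w i j) p,
          2 * p <= j - i + 1,
          (i == 1) || (letter w i.-1 != letter w (i.-1 + p)) &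
          (j == size w) || (letter w j.+1 != letter w (j.+1 - p))]]].

Definition nruns (w : seq bool) : nat :=
  \sum_(i < (size w).+1) \sum_(j < (size w).+1) is_run w i j.

Definition rho (n : nat) : nat := \max_(w : n.-tuple bool) nruns w.

(* Main.v *)
Require Import Defs.
From Stdlib Require Import Reals.
Open Scope R_scope.

From mathcomp Require Import all_boot zify.
From Stdlib Require Import ClassicalEpsilon Lra Classical.
Open Scope nat_scope.
Set Implicit Arguments. Unset Strict Implicit. Unset Printing Implicit Defensive.

Definition per (w : seq bool) (a b p : nat) : Prop :=
  forall z, a <= z -> z + p <= b -> nth false w z = nth false w (z + p).

Record run0 (w : seq bool) (a b p : nat) : Prop := Run0 {
  r_p : 0 < p;
  r_len : a + 2 * p <= b + 1;
  r_b : b < size w;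
  r_per : per w a b p;
  r_least : forall q, 0 < q < p -> ~ per w a b q;
  r_left : a = 0 \/ nth false w a.-1 != nth false w (a.-1 + p);
  r_right : b.+1 = size w \/ nth false w b.+1 != nth false w (b.+1 - p) }.

Lemma factor_size w i j : 0 < i -> i <= j -> j <= size w ->
  size (factor w i j) = j - i + 1.
Proof. move=> Hi Hij Hj; rewrite /factor size_take size_drop; case: ifP; lia. Qed.

Lemma factor_nth w i j x : 0 < i -> i <= j -> j <= size w -> x < j - i + 1 ->
  nth false (factor w i j) x = nth false w (i.-1 + x).
Proof.
move=> Hi Hij Hj Hx; rewrite /factor nth_take // nth_drop //.
Qed.

Lemma is_periodP w i j q : 0 < i -> i <= j -> j <= size w ->
  is_period (factor w i j) q <-> 0 < q /\ per w i.-1 j.-1 q.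
Proof.
move=> Hi Hij Hj; have Hs := factor_size Hi Hij Hj.
rewrite /is_period; split.
- move=> /andP [Hq /forallP H]; split => //.
  move=> z Hz1 Hz2.
  have Hk : z - i.-1 < size (factor w i j) by rewrite Hs; lia.
  have := H (Ordinal Hk) => /= /implyP.
  rewrite Hs /letter.
  have -> : (z - i.-1 + 1 + q).-1 = z - i.-1 + q by lia.
  have -> : (z - i.-1 + 1).-1 = z - i.-1 by lia.
  move=> H2; have /eqP := H2 ltac:(lia).
  rewrite !factor_nth //; try lia.
  have -> : i.-1 + (z - i.-1 + q) = z + q by lia.
  have -> : i.-1 + (z - i.-1) = z by lia.
  by move=> ->.
- move=> [Hq H]; apply/andP; split => //.
  apply/forallP => k; apply/implyP => Hk0.
  have Hk : k + q < j - i + 1 by rewrite -Hs.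
  have Hk' : k < j - i + 1 by rewrite -Hs ltn_ord.
  rewrite /letter.
  have -> : (k + 1 + q).-1 = k + q by lia.
  have -> : (k + 1).-1 = k by lia.
  rewrite !factor_nth //; try lia.
  rewrite addnA (H (i.-1 + k)) //; lia.
Qed.

Lemma is_runP w i j : is_run w i j <-> 0 < i /\ exists p, run0 w i.-1 j.-1 p.
Proof.
rewrite /is_run; split.
- move=> /and4P [Hi Hij Hj /existsP [p /and4P [Hlp H2p Hl Hr]]].
  have Hij' : i <= j by lia.
  move: Hlp => /andP [Hp /forallP Hlt].
  have [Hp0 Hper] := (is_periodP _ Hi Hij' Hj).1 Hp.
  split => //; exists p; constructor => //.
  + lia.
  + lia.
  + move=> q /andP [Hq0 Hqp] Hq.
    have /negP := Hlt (Ordinal Hqp); apply; apply/(is_periodP _ Hi Hij' Hj).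
    by split.
  + move: Hl; case: eqP => [->|Hi1] /=; first by left.
    rewrite /letter => H; right; move: H.
    by have -> : (i.-1 + p).-1 = i.-1.-1 + p by lia.
  + move: Hr; case: eqP => [->|Hj1] /=; first by left; lia.
    rewrite /letter => H; right; move: H.
    have -> : (j.+1 - p).-1 = j.-1.+1 - p by lia.
    by have -> : j.+1.-1 = j.-1.+1 by lia.
- move=> [Hi [p [Hp Hlen Hb Hper Hleast Hl Hr]]].
  have Hij : i <= j by lia.
  have Hj : j <= size w by lia.
  apply/and4P; split => //; first by lia.
  have Hps : p < (size w).+1 by lia.
  apply/existsP; exists (Ordinal Hps) => /=.
  apply/and4P; split.
  + apply/andP; split; first by apply/(is_periodP _ Hi Hij Hj).
    apply/forallP => q; apply/negP; rewrite (is_periodP _ Hi Hij Hj) => [[Hq0 Hq]].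
    by apply: (Hleast q) => //; rewrite Hq0 ltn_ord.
  + lia.
  + case: (eqVneq i 1) => [->|Hi1] //=.
    case: Hl => [Ha|Ha]; first by exfalso; lia.
    rewrite /letter.
    by have -> : (i.-1 + p).-1 = i.-1.-1 + p by lia.
  + case: (eqVneq j (size w)) => [->|Hj1] //=.
    case: Hr => [Hbb|Hbb]; first by exfalso; lia.
    rewrite /letter.
    have -> : (j.+1 - p).-1 = j.-1.+1 - p by lia.
    by have -> : j.+1.-1 = j.-1.+1 by lia.
Qed.

Lemma per_sub w a b p a' b' : per w a b p -> a <= a' -> b' <= b -> per w a' b' p.
Proof. move=> H Ha Hb z Hz1 Hz2; apply: H; lia. Qed.

Lemma nth_catl (u v : seq bool) z : z < size u -> nth false (u ++ v) z = nth false u z.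
Proof. by move=> H; rewrite nth_cat H. Qed.

Lemma nth_catr (u v : seq bool) z : nth false (u ++ v) (size u + z) = nth false v z.
Proof. by rewrite nth_cat ltnNge leq_addr /= addKn. Qed.

Lemma per_catl u v a b p : b < size u -> per (u ++ v) a b p <-> per u a b p.
Proof.
move=> Hb; split => H z Hz1 Hz2; have := H z Hz1 Hz2;
  rewrite !nth_catl //; lia.
Qed.

Lemma per_catr u v a b p : per (u ++ v) (size u + a) (size u + b) p <-> per v a b p.
Proof.
split => H z Hz1 Hz2.
- have := H (size u + z); rewrite -addnA !nth_catr; apply; lia.
- have -> : z = size u + (z - size u) by lia.
  rewrite -addnA !nth_catr; apply: H; lia.
Qed.

Lemma run_prefix u v a b p : run0 u a b p -> b.+1 < size u -> run0 (u ++ v) a b p.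
Proof.
move=> [Hp Hlen Hb Hper Hl Hleft Hright] Hb1; constructor => //.
- rewrite size_cat; lia.
- by apply/per_catl.
- by move=> q Hq /per_catl H; apply: (Hl q Hq); apply: H.
- case: Hleft => [->|H]; [by left|right].
  rewrite !nth_catl //; lia.
- right; case: Hright => [H|H]; first lia.
  rewrite !nth_catl //; lia.
Qed.

Lemma run_suffix u v a b p : run0 v a b p -> 0 < a ->
  run0 (u ++ v) (size u + a) (size u + b) p.
Proof.
move=> [Hp Hlen Hb Hper Hl Hleft Hright] Ha; constructor => //.
- lia.
- rewrite size_cat; lia.
- by apply/per_catr.
- by move=> q Hq /per_catr H; apply: (Hl q Hq).
- right; case: Hleft => [H|H]; first lia.
  have -> : (size u + a).-1 = size u + a.-1 by lia.
  by rewrite -addnA !nth_catr.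
- case: Hright => [H|H]; [left; rewrite size_cat; lia|right].
  have -> : (size u + b).+1 - p = size u + (b.+1 - p) by lia.
  by rewrite -addnS !nth_catr.
Qed.

Lemma ext_right w a b p : per w a b p -> a + p <= b.+1 -> b < size w ->
  exists b', [/\ b <= b', b' < size w, per w a b' p &
    (b'.+1 = size w \/ nth false w b'.+1 != nth false w (b'.+1 - p))].
Proof.
move Hk : (size w - b) => k; elim: k b Hk => [|k IH] b Hk Hper Hap Hb; first lia.
case: (eqVneq b.+1 (size w)) => [Hs|Hs].
  by exists b; split => //; left.
case: (eqVneq (nth false w b.+1) (nth false w (b.+1 - p))) => [He|He]; last first.
  by exists b; split => //; right.
have [||||b' [H1 H2 H3 H4]] := IH b.+1; try lia.
- move=> z Hz1 Hz2; case: (eqVneq (z + p) b.+1) => [Hz|Hz].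
  + have -> : z = b.+1 - p by lia.
    have -> : b.+1 - p + p = b.+1 by lia. by rewrite He.
  + apply: Hper; lia.
- by exists b'; split => //; lia.
Qed.

Lemma ext_left w a b p : per w a b p -> a + p <= b.+1 ->
  exists a', [/\ a' <= a, per w a' b p &
    (a' = 0 \/ nth false w a'.-1 != nth false w (a'.-1 + p))].
Proof.
elim: a => [|a IH] Hper Hap; first by exists 0; split => //; left.
case: (eqVneq (nth false w a) (nth false w (a + p))) => [He|He]; last first.
  by exists a.+1; split => //; right.
have [||a' [H1 H2 H3]] := IH; try lia.
- move=> z Hz1 Hz2; case: (eqVneq z a) => [->|Hz] //; apply: Hper; lia.
- by exists a'; split => //; lia.
Qed.

Lemma least_sub w a b p a' b' : (forall q, 0 < q < p -> ~ per w a b q) ->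
  a' <= a -> b <= b' -> (forall q, 0 < q < p -> ~ per w a' b' q).
Proof. move=> H Ha Hb q Hq Hper; apply: (H q Hq); exact: per_sub Hper Ha Hb. Qed.

Lemma run_ext_right u v a b p : run0 u a b p -> exists b',
  [/\ b <= b', b' < size (u ++ v) & run0 (u ++ v) a b' p].
Proof.
move=> [Hp Hlen Hb Hper Hl Hleft Hright].
have Hper' : per (u ++ v) a b p by apply/per_catl.
have [||b' [H1 H2 H3 H4]] := ext_right Hper'; try (rewrite ?size_cat; lia).
exists b'; split => //; constructor => //; try lia.
- move=> q Hq Hq'; apply: (Hl q Hq); apply/(@per_catl u v a b q Hb).
  exact: per_sub Hq' _ H1.
- case: Hleft => [->|H]; [by left|right].
  rewrite !nth_catl //; lia.
Qed.

Lemma run_ext_left u v a b p : run0 v a b p -> exists a',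
  [/\ a' <= size u + a & run0 (u ++ v) a' (size u + b) p].
Proof.
move=> [Hp Hlen Hb Hper Hl Hleft Hright].
have Hper' : per (u ++ v) (size u + a) (size u + b) p by apply/per_catr.
have [|a' [H1 H2 H3]] := ext_left Hper'; first lia.
exists a'; split => //; constructor => //; try lia.
- rewrite size_cat; lia.
- move=> q Hq Hq'; apply: (Hl q Hq); apply/(@per_catr u v a b q).
  exact: per_sub Hq' H1 _.
- case: Hright => [H|H]; [left; rewrite size_cat; lia|right].
  have -> : (size u + b).+1 - p = size u + (b.+1 - p) by lia.
  by rewrite -addnS !nth_catr.
Qed.

Lemma choose_fun (T1 T2 : Type) (y0 : T2) (A : T1 -> Prop) (P : T1 -> T2 -> Prop) :
  (forall x, A x -> exists y, P x y) -> exists f : T1 -> T2, forall x, A x -> P x (f x).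
Proof.
move=> H; exists (fun x => epsilon (inhabits y0) (P x)).
move=> x Hx; apply: epsilon_spec; exact: H.
Qed.

Lemma card_rel (T1 T2 : finType) (A : {pred T1}) (B : {pred T2}) (y0 : T2)
  (R : T1 -> T2 -> Prop) :
  (forall x, x \in A -> exists y, y \in B /\ R x y) ->
  (forall x x' y, x \in A -> x' \in A -> R x y -> R x' y -> x = x') -> #|A| <= #|B|.
Proof.
move=> H1 H2; have [f Hf] := choose_fun y0 H1.
rewrite -(@card_in_imset _ _ f A).
  apply: subset_leq_card; apply/subsetP => y /imsetP [x Hx ->].
  by case: (Hf x Hx).
move=> x x' Hx Hx' Hxx'.
apply: (H2 x x' (f x)) => //; first by case: (Hf x Hx).
by rewrite Hxx'; case: (Hf x' Hx').
Qed.

Lemma card_rel2 (T1 T1' T2 : finType) (A : {pred T1}) (A' : {pred T1'}) (B : {pred T2})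
  (y0 : T2) (R : T1 -> T2 -> Prop) (R' : T1' -> T2 -> Prop) :
  (forall x, x \in A -> exists y, y \in B /\ R x y) ->
  (forall x, x \in A' -> exists y, y \in B /\ R' x y) ->
  (forall x x' y, x \in A -> x' \in A -> R x y -> R x' y -> x = x') ->
  (forall x x' y, x \in A' -> x' \in A' -> R' x y -> R' x' y -> x = x') ->
  (forall x x' y, x \in A -> x' \in A' -> R x y -> R' x' y -> False) ->
  #|A| + #|A'| <= #|B|.
Proof.
move=> H1 H1' H2 H2' H3.
have [f Hf] := choose_fun y0 H1; have [f' Hf'] := choose_fun y0 H1'.
have Ei : {in A &, injective f}.
  move=> x x' Hx Hx' Hxx'; apply: (H2 x x' (f x)) => //; first by case: (Hf x Hx).
  by rewrite Hxx'; case: (Hf x' Hx').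
have Ei' : {in A' &, injective f'}.
  move=> x x' Hx Hx' Hxx'; apply: (H2' x x' (f' x)) => //; first by case: (Hf' x Hx).
  by rewrite Hxx'; case: (Hf' x' Hx').
rewrite -(card_in_imset Ei) -(card_in_imset Ei').
have D : (f @: A) :&: (f' @: A') = set0.
  apply/setP => y; rewrite !inE; apply/negP => /andP [/imsetP [x Hx ->] /imsetP [x' Hx' E]].
  apply: (H3 x x' (f x) Hx Hx'); first by case: (Hf x Hx).
  by rewrite E; case: (Hf' x' Hx').
have := cardsU (f @: A) (f' @: A'); rewrite D cards0 subn0 => <-.
apply: subset_leq_card; apply/subsetP => y; rewrite inE => /orP [] /imsetP [x Hx ->].
- by case: (Hf x Hx).
- by case: (Hf' x Hx).
Qed.

Definition RS (w : seq bool) : {pred 'I_(size w).+1 * 'I_(size w).+1} :=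
  [pred x : 'I_(size w).+1 * 'I_(size w).+1 | is_run w x.1 x.2].
Definition RR (w : seq bool) : {pred 'I_(size w).+1 * 'I_(size w).+1} :=
  [pred x : 'I_(size w).+1 * 'I_(size w).+1 | is_run w x.1 x.2 && (x.2 < size w)].

Arguments RS : clear implicits.
Arguments RR : clear implicits.

Lemma nruns_card w : nruns w = #|RS w|.
Proof.
rewrite /nruns pair_big /= -(sum1_card (RS w)) [RHS]big_mkcond /=.
by apply: eq_bigr => x _; rewrite inE; case: (is_run _ _ _).
Qed.

Lemma RR_RS w : #|RR w| <= #|RS w|.
Proof. apply: subset_leq_card; apply/subsetP => x; rewrite !inE => /andP []//. Qed.

Lemma pair_eq n (x y : 'I_n * 'I_n) : (x.1 : nat) = y.1 -> (x.2 : nat) = y.2 -> x = y.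
Proof. by case: x y => [x1 x2] [y1 y2] /= E1 E2; congr pair; apply/val_inj. Qed.

Lemma mk_run w a b p : run0 w a b p ->
  exists y : 'I_(size w).+1 * 'I_(size w).+1, [/\ (y.1 : nat) = a.+1, (y.2 : nat) = b.+1
     & is_run w y.1 y.2].
Proof.
move=> H; have [Hp Hl Hb _ _ _ _] := H.
have H1 : a.+1 < (size w).+1 by lia.
have H2 : b.+1 < (size w).+1 by lia.
exists (Ordinal H1, Ordinal H2); split => //=.
by apply/is_runP; split => //; exists p.
Qed.

Lemma superadd u v : #|RR u| + #|RR v| <= #|RR (u ++ v)|.
Proof.
have y0 : 'I_(size (u ++ v)).+1 * 'I_(size (u ++ v)).+1 by exact: (ord0, ord0).
apply: (@card_rel2 _ _ _ (RR u) (RR v) (RR (u ++ v)) y0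
  (fun (x : 'I_(size u).+1 * 'I_(size u).+1) (y : 'I_(size (u ++ v)).+1 * 'I_(size (u ++ v)).+1) => (y.1 : nat) = x.1 /\ (y.2 : nat) = x.2)
  (fun (x : 'I_(size v).+1 * 'I_(size v).+1) (y : 'I_(size (u ++ v)).+1 * 'I_(size (u ++ v)).+1) => (y.2 : nat) = size u + x.2 /\ (1 < x.1 -> (y.1 : nat) = size u + x.1)
              /\ ((x.1 : nat) = 1 -> y.1 <= size u + 1))).
- move=> x; rewrite inE => /andP [/is_runP [Hi [p Hp]] Hj].
  have Hb := r_b Hp; have Hl := r_len Hp; have Hp0 := r_p Hp.
  have [y [E1 E2 Hy]] := mk_run (run_prefix v Hp ltac:(lia)).
  exists y; split; first by rewrite inE Hy /= E2 size_cat; lia.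
  split; lia.
- move=> x; rewrite inE => /andP [/is_runP [Hi [p Hp]] Hj].
  have Hb := r_b Hp; have Hl := r_len Hp; have Hp0 := r_p Hp.
  case: (ltnP 1 x.1) => Hx1.
  + have Ha : 0 < x.1.-1 by lia.
    have [y [E1 E2 Hy]] := mk_run (run_suffix u Hp Ha).
    exists y; split; first by rewrite inE Hy /= E2 size_cat; lia.
    split; first lia. split; lia.
  + have [a' [Ha' Hr]] := run_ext_left u Hp.
    have [y [E1 E2 Hy]] := mk_run Hr.
    exists y; split; first by rewrite inE Hy /= E2 size_cat; lia.
    split; first lia. split; lia.
- move=> x x' y _ _ [E1 E2] [E1' E2']; apply: pair_eq; lia.
- move=> [x1 x2] [x1' x2'] [y1 y2]; rewrite !inE /=.
  move=> /andP [/is_runP [Hi _] _] /andP [/is_runP [Hi' _] _].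
  move=> [E1 [E2 E3]] [E1' [E2' E3']]; apply: pair_eq => /=; last lia.
  case: (ltnP 1 x1) => h1; case: (ltnP 1 x1') => h2.
  + have := E2 h1; have := E2' h2; lia.
  + have h3 : (x1' : nat) = 1 by lia.
    have := E2 h1; have := E3' h3; lia.
  + have h3 : (x1 : nat) = 1 by lia.
    have := E3 h3; have := E2' h2; lia.
  + lia.
- move=> [x1 x2] [x1' x2'] [y1 y2]; rewrite !inE /= => /andP [_ Hj] _ [E1 E2] [E1' _]; lia.
Qed.

Definition cont (w : seq bool) p c := mkseq (fun t => nth false w (size w - p + t %% p)) c.

Lemma cont_eq w x a p : per (w ++ x) a (size (w ++ x)).-1 p -> a + 2 * p <= size w ->
  0 < p -> x = cont w p (size x).
Proof.
move=> Hper Hl Hp.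
apply: (@eq_from_nth _ false); first by rewrite size_mkseq.
move=> t Ht; rewrite nth_mkseq //.
elim/ltn_ind: t Ht => t IH Ht.
have E : nth false x t = nth false (w ++ x) (size w + t - p).
  rewrite -(nth_catr w); have := Hper (size w + t - p); rewrite size_cat => ->; try lia.
  by congr nth; lia.
rewrite E; case: (ltnP t p) => Htp.
- rewrite nth_catl; last lia. rewrite modn_small //. by congr nth; lia.
- have -> : size w + t - p = size w + (t - p) by lia.
  rewrite nth_catr IH; try lia.
  by rewrite -[(t - p) %% p](modnDr _ p) subnK.
Qed.

Lemma gadget w x : (forall p, 0 < p <= size w -> x != cont w p (size x)) ->
  #|RS w| <= #|RR (w ++ x)|.
Proof.
move=> Hx.
have y0 : 'I_(size (w ++ x)).+1 * 'I_(size (w ++ x)).+1 by exact: (ord0, ord0).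
apply: (@card_rel _ _ (RS w) (RR (w ++ x)) y0
  (fun (z : 'I_(size w).+1 * 'I_(size w).+1) (y : 'I_(size (w ++ x)).+1 * 'I_(size (w ++ x)).+1) =>
     (y.1 : nat) = z.1 /\ (z.2 < size w -> (y.2 : nat) = z.2) /\ ((z.2 : nat) = size w -> size w <= y.2))).
- move=> [z1 z2]; rewrite inE /= => /is_runP [Hi [p Hp]].
  have Hb := r_b Hp; have Hl := r_len Hp; have Hp0 := r_p Hp.
  case: (ltnP z2 (size w)) => Hz.
  + have Hb1 : z2.-1.+1 < size w by lia.
    have [y [E1 E2 Hy]] := mk_run (run_prefix x Hp Hb1).
    exists y; split; first by rewrite inE Hy /= E2 size_cat; lia.
    split; first lia. split; lia.
  + have [b' [H1 H2 Hr]] := run_ext_right x Hp.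
    have [y [E1 E2 Hy]] := mk_run Hr.
    exists y; split; last by split; first lia; split; lia.
    rewrite inE Hy /= E2.
    case: (ltnP b'.+1 (size (w ++ x))) => // Hb'.
    have Hb'' : b' = (size (w ++ x)).-1 by lia.
    exfalso; rewrite Hb'' in Hr.
    have Hc' := @cont_eq w x z1.-1 p.
    have : x = cont w p (size x).
      apply: Hc'; last exact Hp0; last lia.
      by have := r_per Hr.
    by apply/eqP; apply: Hx; lia.
- move=> [z1 z2] [z1' z2'] [y1 y2]; rewrite !inE /= => /is_runP [Hi [p Hp]] /is_runP [Hi' [p' Hp']].
  have Hb := r_b Hp; have Hb' := r_b Hp'.
  move=> [E1 [E2 E3]] [E1' [E2' E3']]; apply: pair_eq => /=; first lia.
  case: (ltnP z2 (size w)) => h1; case: (ltnP z2' (size w)) => h2.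
  + have := E2 h1; have := E2' h2; lia.
  + have h3 : (z2' : nat) = size w by lia.
    have := E2 h1; have := E3' h3; lia.
  + have h3 : (z2 : nat) = size w by lia.
    have := E3 h3; have := E2' h2; lia.
  + lia.
Qed.

Lemma exists_gadget w c : size w < 2 ^ c ->
  exists x : seq bool, size x = c /\ forall p, 0 < p <= size w -> x != cont w p (size x).
Proof.
move=> Hc.
pose L := [seq cont w p.+1 c | p <- iota 0 (size w)].
case: (boolP [exists t : c.-tuple bool, tval t \notin L]).
- move=> /existsP [t Ht]; exists (tval t); split; first by rewrite size_tuple.
  move=> p Hp; apply/negP => /eqP E; move: Ht; rewrite E size_tuple; apply/negP/negPn.
  apply/mapP; exists p.-1; first by rewrite mem_iota; lia.
  by have -> : p.-1.+1 = p by lia.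
- rewrite negb_exists => /forallP H; exfalso.
  have U : uniq (map val (enum {: c.-tuple bool})) by rewrite map_inj_uniq ?enum_uniq //; exact: val_inj.
  have S : {subset map val (enum {: c.-tuple bool}) <= L}.
    by move=> s /mapP [t _ ->]; have := H t; rewrite negbK.
  have := uniq_leq_size U S.
  rewrite size_map -cardE card_tuple card_bool size_map size_iota; lia.
Qed.

Fixpoint lexlt (c : bool) (s t : seq bool) : bool :=
  match s, t with
  | [::], [::] => false
  | [::], _ :: _ => true
  | _ :: _, [::] => false
  | x :: s', y :: t' => if x == y then lexlt c s' t' else x == c
  end.

Lemma lexlt_asym c s t : lexlt c s t -> lexlt c t s = false.
Proof.
elim: s t => [|x s IH] [|y t] //=.
case: eqP => [->|Hxy]; first by rewrite eqxx; apply: IH.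
by clear IH; case: x y Hxy => [] [] //; case: c.
Qed.

Lemma lexlt_wit c s t L : (forall x, x < L -> nth false s x = nth false t x) ->
  L < size t -> L <= size s ->
  (L = size s \/ (nth false s L = c /\ nth false t L != c)) -> lexlt c s t.
Proof.
elim: L s t => [|L IH] s t Heq Ht Hs H.
- case: s t Ht Hs H {Heq} => [|x s] [|y t] //= _ _ H.
  case: H => [H|[Hx Hy]]; first by [].
  subst x; case: (eqVneq c y) => [E|E]; first by rewrite E eqxx in Hy.
  by rewrite eqxx.
- case: s t Ht Hs H Heq => [|x s] [|y t] //= Ht Hs H Heq.
  have Exy := Heq 0 isT; rewrite /= in Exy; rewrite Exy eqxx.
  apply: IH => //.
  + by move=> z Hz; apply: (Heq z.+1).
  + case: H => [[]|]; by [left|right].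
Qed.

Section Lyndon.
Variables (u : nat -> bool) (p : nat) (c : bool).
Hypothesis Hp : 0 < p.
Hypothesis Hper : forall t, u (t + p) = u t.
Hypothesis Hprim : forall d, 0 < d < p -> ~ (forall t, u (t + d) = u t).

Definition ltw (f g : nat -> bool) L := exists e, [/\ e < L,
  (forall e', e' < e -> f e' = g e'), f e = c & g e != c].

Lemma ltw_irr f L : ~ ltw f f L.
Proof. by move=> [e [_ _ -> ]]; rewrite eqxx. Qed.

Lemma ltw_trans f g h L : ltw f g L -> ltw g h L -> ltw f h L.
Proof.
move=> [e1 [H1 E1 F1 G1]] [e2 [H2 E2 F2 G2]].
case: (ltngtP e1 e2) => He.
- exists e1; split => //; last by rewrite -E2.
  by move=> e' He'; rewrite E1 // E2 //; lia.
- exists e2; split => //; last by rewrite E1.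
  by move=> e' He'; rewrite E1 ?E2 //; lia.
- by subst e2; rewrite F2 eqxx in G1.
Qed.

Lemma ltw_total f g L : (forall e, e < L -> f e = g e) \/ ltw f g L \/ ltw g f L.
Proof.
elim: L => [|L IH]; first by left.
case: IH => [H|[[e [H1 H2 H3 H4]]|[e [H1 H2 H3 H4]]]].
- case: (eqVneq (f L) (g L)) => E.
  + left => e He; case: (ltnP e L) => He'; first by apply: H.
    by have -> : e = L by lia.
  + right; case: (eqVneq (f L) c) => Ef.
    * left; exists L; split => //; by rewrite -Ef eq_sym.
    * right; exists L; split => //; first by move=> e' He'; rewrite H.
      by case: (f L) (g L) c E Ef => [] [] [].
- right; left; exists e; split => //; lia.
- right; right; exists e; split => //; lia.
Qed.

Lemma ltw_ext f f' g g' L : (forall t, f t = f' t) -> (forall t, g t = g' t) ->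
  ltw f g L -> ltw f' g' L.
Proof.
move=> Ef Eg [e [H1 H2 H3 H4]]; exists e; split => //.
- by move=> e' He'; rewrite -Ef -Eg H2.
- by rewrite -Ef.
- by rewrite -Eg.
Qed.

Lemma per_iter t m : u (t + m * p) = u t.
Proof. elim: m => [|m IH]; first by rewrite mul0n addn0. have -> : t + m.+1 * p = (t + m * p) + p by rewrite mulSn; lia.
by rewrite Hper. Qed.

Let U s := fun t => u (s + t).

Lemma U_mod s t : u (s + t) = u (s %% p + t).
Proof. by rewrite {1}(divn_eq s p) -addnA (addnC (_ * p)) per_iter. Qed.

Lemma min_window n : 0 < n <= p -> exists k, 0 < k <= n /\
  forall s, 0 < s <= n -> ~ ltw (U s) (U k) p.
Proof.
elim: n => [|n IH] Hn; first lia.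
case: (posnP n) => [->|Hn0].
  exists 1; split => // s Hs; have -> : s = 1 by lia. exact: ltw_irr.
have [//|k [Hk Hmin]] := IH; first lia.
case: (ltw_total (U n.+1) (U k) p) => [E|[Hlt|Hgt]].
- exists k; split; first lia.
  move=> s Hs; case: (eqVneq s n.+1) => [->|Hsn]; last by apply: Hmin; lia.
  move=> [e [H1 H2 H3 H4]]; move: H4; by rewrite -E // H3 eqxx.
- exists n.+1; split; first lia.
  move=> s Hs; case: (eqVneq s n.+1) => [->|Hsn]; first exact: ltw_irr.
  move=> H; apply: (Hmin s); first lia. exact: ltw_trans H Hlt.
- exists k; split; first lia.
  move=> s Hs; case: (eqVneq s n.+1) => [->|Hsn]; last by apply: Hmin; lia.
  move=> H; apply: (Hmin k); first lia.
  exact: ltw_trans Hgt H.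
Qed.

Lemma min_rot : exists k, 0 < k <= p /\ forall s, ~ ltw (U s) (U k) p.
Proof.
have [|k [Hk Hmin]] := min_window (n := p); first lia.
exists k; split => // s H.
pose s' := if s %% p == 0 then p else s %% p.
apply: (Hmin s'); first by rewrite /s'; case: eqP => E; [lia|have := ltn_pmod s Hp; lia].
apply: ltw_ext H => // t; rewrite /U U_mod /s'; case: eqP => // ->.
by rewrite add0n addnC Hper.
Qed.

Lemma distinct k d : 0 < d < p -> ~ (forall t, t < p -> u (k + d + t) = u (k + t)).
Proof.
move=> Hd H.
have H' : forall x, u (k + d + x) = u (k + x).
  elim/ltn_ind => x IH; case: (ltnP x p) => Hx; first exact: H.
  have -> : k + d + x = (k + d + (x - p)) + p by lia.
  have -> : k + x = (k + (x - p)) + p by lia.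
  rewrite !Hper; apply: IH; lia.
apply: (Hprim Hd) => t.
rewrite -(per_iter (t + d) k) -[in RHS](per_iter t k).
have Hkp : k <= k * p by rewrite leq_pmulr.
move: Hkp; set kp := k * p => Hkp.
have -> : t + d + kp = k + d + (t + kp - k) by lia.
have -> : u (t + kp) = u (k + (t + kp - k)) by congr u; lia.
exact: H'.
Qed.

Lemma main_lyndon k : (forall s, ~ ltw (U s) (U k) p) ->
  forall m, k < m < k + p -> ltw (U k) (U m) (k + p - m).
Proof.
move=> Hmin m Hm.
case: (ltw_total (U k) (U m) p) => [E|[Hlt|Hgt]].
- exfalso; apply: (distinct (k := k) (d := m - k)); first lia.
  move=> t Ht; have -> : k + (m - k) = m by lia. by rewrite /U in E; rewrite E.
- move: Hlt => [e [H1 H2 H3 H4]].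
  case: (ltnP e (k + p - m)) => He.
  + by exists e; split.
  + exfalso; apply: (Hmin (k + (k + p - m))).
    exists (e - (k + p - m)); split; first lia.
    * move=> e' He'; rewrite /U.
      have -> : k + (k + p - m) + e' = k + (k + p - m + e') by lia.
      have := H2 (k + p - m + e') ltac:(lia); rewrite /U => ->.
      have -> : m + (k + p - m + e') = (k + e') + p by lia.
      by rewrite Hper.
    * rewrite /U; have -> : k + (k + p - m) + (e - (k + p - m)) = k + e by lia.
      exact: H3.
    * rewrite /U -Hper; have -> : k + (e - (k + p - m)) + p = m + e by lia.
      exact: H4.
- by exfalso; apply: (Hmin m).
Qed.

End Lyndon.

Lemma per_modrun w a b p t : per w a b p -> 0 < p -> a + t <= b ->
  nth false w (a + t) = nth false w (a + t %% p).
Proof.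
move=> Hper Hp; elim/ltn_ind: t => t IH Ht.
case: (ltnP t p) => Htp; first by rewrite modn_small.
have -> : a + t = (a + (t - p)) + p by lia.
rewrite -Hper; try lia.
rewrite IH; try lia.
by rewrite -[(t - p) %% p](modnDr _ p) subnK.
Qed.

Lemma suffix_lt w a b p m : run0 w a b p -> a <= m -> m + p <= b.+1 ->
  lexlt (if b.+1 < size w then nth false w b.+1 else false) (drop (m + p) w) (drop m w).
Proof.
move=> [Hp Hlen Hb Hper Hl Hleft Hright] Hm Hmp.
apply: (@lexlt_wit _ _ _ (b.+1 - m - p)).
- move=> x Hx; rewrite !nth_drop; have -> : m + p + x = (m + x) + p by lia.
  symmetry; apply: Hper; lia.
- rewrite size_drop; lia.
- rewrite size_drop; lia.
- case: (ltnP b.+1 (size w)) => Hbn; last by left; rewrite size_drop; lia.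
  right; rewrite !nth_drop; split.
  + by congr nth; lia.
  + case: Hright => [H|H]; first lia.
    have -> : m + (b.+1 - m - p) = b.+1 - p by lia.
    by rewrite eq_sym.
Qed.

Lemma run_lyndon w a b p : run0 w a b p -> exists K, [/\ a < K, K + p <= b.+1 &
  forall d, 0 < d < p ->
    lexlt (if b.+1 < size w then nth false w b.+1 else false) (drop (K + d) w) (drop K w) = false].
Proof.
move=> Hr; have [Hp Hlen Hb Hper Hl Hleft Hright] := Hr.
set c := (if _ then _ else _).
pose u t := nth false w (a + t %% p).
have Hu : forall t, a + t <= b -> nth false w (a + t) = u t.
  by move=> t Ht; rewrite /u -(per_modrun Hper Hp Ht).
have Hup : forall t, u (t + p) = u t by move=> t; rewrite /u modnDr.
have Hprim : forall d, 0 < d < p -> ~ (forall t, u (t + d) = u t).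
  move=> d Hd H; apply: (Hl d Hd) => z Hz1 Hz2.
  have -> : z = a + (z - a) by lia.
  rewrite -addnA !Hu; try lia. by rewrite H.
have [k [Hk Hmin]] := min_rot c Hp Hup.
exists (a + k); split; try lia.
move=> d Hd; apply: lexlt_asym.
have [|e [H1 H2 H3 H4]] := @main_lyndon u p c Hp Hup Hprim k Hmin (k + d); first lia.
apply: (@lexlt_wit _ _ _ e).
- move=> x Hx; rewrite !nth_drop -addnA Hu; last lia.
  have E := H2 x Hx; simpl in E; rewrite E.
  have -> : a + k + d + x = a + (k + d + x) by lia.
  rewrite Hu //; lia.
- rewrite size_drop; lia.
- rewrite size_drop; lia.
- right; rewrite !nth_drop -addnA Hu; last lia.
  have -> : a + k + d + e = a + (k + d + e) by lia.
  rewrite Hu; last lia. by split.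
Qed.

Lemma run_eq w a b p a' b' K : run0 w a b p -> run0 w a' b' p ->
  a < K -> a' < K -> K + p <= b.+1 -> K + p <= b'.+1 -> a = a' /\ b = b'.
Proof.
move=> [Hp Hlen Hb Hper Hl Hleft Hright] [_ Hlen' Hb' Hper' Hl' Hleft' Hright'] H1 H2 H3 H4.
split.
- case: (ltngtP a a') => // Ha; exfalso.
  + case: Hleft' => [?|H]; first lia.
    move/eqP: H; apply; apply: (Hper a'.-1); lia.
  + case: Hleft => [?|H]; first lia.
    move/eqP: H; apply; apply: (Hper' a.-1); lia.
- case: (ltngtP b b') => // Hbb; exfalso.
  + case: Hright => [?|H]; first lia.
    move/eqP: H; apply.
    have E := Hper' (b.+1 - p) ltac:(lia) ltac:(lia).
    have E2 : b.+1 - p + p = b.+1 by lia.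
    by rewrite E2 in E.
  + case: Hright' => [?|H]; first lia.
    move/eqP: H; apply.
    have E := Hper (b'.+1 - p) ltac:(lia) ltac:(lia).
    have E2 : b'.+1 - p + p = b'.+1 by lia.
    by rewrite E2 in E.
Qed.

Lemma runs_upper w : #|RS w| <= 2 * (size w).+1.
Proof.
have y0 : bool * 'I_(size w).+1 by exact: (false, ord0).
have -> : 2 * (size w).+1 = #|{: bool * 'I_(size w).+1}| by rewrite card_prod card_bool card_ord.
apply: (@card_rel _ _ (RS w) [pred _ | true] y0
  (fun (x : 'I_(size w).+1 * 'I_(size w).+1) (y : bool * 'I_(size w).+1) =>
    exists p, [/\ run0 w x.1.-1 x.2.-1 p, x.1.-1 < y.2, y.2 + p <= x.2.-1.+1,
      lexlt y.1 (drop (y.2 + p) w) (drop y.2 w) &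
      forall d, 0 < d < p -> lexlt y.1 (drop (y.2 + d) w) (drop y.2 w) = false])).
- move=> [x1 x2]; rewrite inE /= => /is_runP [Hi [p Hp]].
  have [K [HK1 HK2 HK3]] := run_lyndon Hp.
  have HKn : K < (size w).+1 by have := r_b Hp; lia.
  exists (if x2.-1.+1 < size w then nth false w x2.-1.+1 else false, Ordinal HKn).
  split => //; exists p; split => //=.
  apply: suffix_lt Hp _ _; lia.
- move=> [x1 x2] [x1' x2'] [c K]; rewrite !inE /= => /is_runP [Hi _] /is_runP [Hi' _].
  move=> [p [Hr H1 H2 H3 H4]] [p' [Hr' H1' H2' H3' H4']].
  have Epp : p = p'.
    case: (ltngtP p p') => // Hpp.
    + have := H4' p; rewrite H3; have := r_p Hr; move=> Hp0 H; have := H ltac:(lia); done.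
    + have := H4 p'; rewrite H3'; have := r_p Hr'; move=> Hp0 H; have := H ltac:(lia); done.
  subst p'.
  have [Ea Eb] := run_eq Hr Hr' H1 H1' H2 H2'.
  have L1 := r_len Hr; have L2 := r_len Hr'; have P0 := r_p Hr.
  move: Hi Hi' Ea Eb L1 L2 {H1 H2 H1' H2' Hr Hr'}.
  case: x1 x2 x1' x2' => [i1 ?] [i2 ?] [i1' ?] [i2' ?] /= *.
  apply: pair_eq => /=; lia.
Qed.

Definition Aint (n : nat) : nat := \max_(w : n.-tuple bool) #|RR w|.

Lemma tuple_card_pos n : 0 < #|{: n.-tuple bool}|.
Proof. by rewrite card_tuple card_bool expn_gt0. Qed.

Lemma Aint_le n (w : seq bool) : size w = n -> #|RR w| <= Aint n.
Proof.
move=> Hw; have Hw' : size w == n by apply/eqP.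
by have := @leq_bigmax _ (fun t : n.-tuple bool => #|RR t|) (Tuple Hw').
Qed.

Lemma Aint_super m n : Aint m + Aint n <= Aint (m + n).
Proof.
have [u Eu] := eq_bigmax (fun t : m.-tuple bool => #|RR t|) (tuple_card_pos m).
have [v Ev] := eq_bigmax (fun t : n.-tuple bool => #|RR t|) (tuple_card_pos n).
rewrite /Aint Eu Ev; apply: leq_trans (superadd u v) _.
apply: Aint_le; by rewrite size_cat !size_tuple.
Qed.

Lemma rho_upper n : rho n <= 2 * n.+1.
Proof.
apply/bigmax_leqP => w _; rewrite nruns_card.
apply: leq_trans (runs_upper w) _; by rewrite size_tuple.
Qed.

Lemma Aint_rho n : Aint n <= rho n.
Proof.
apply/bigmax_leqP => w _; apply: leq_trans (RR_RS w) _.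
rewrite -nruns_card; exact: (@leq_bigmax _ (fun t : n.-tuple bool => nruns t) w).
Qed.

Lemma rho_Aint n c : n < 2 ^ c -> rho n <= Aint (n + c).
Proof.
move=> Hc; apply/bigmax_leqP => w _; rewrite nruns_card.
have [x [Hx Hx']] := exists_gadget (w := w) (c := c) ltac:(by rewrite size_tuple).
apply: leq_trans (gadget Hx') _.
apply: Aint_le; by rewrite size_cat size_tuple Hx.
Qed.

Lemma Aint_mul q m : q * Aint m <= Aint (q * m).
Proof.
elim: q => [|q IH]; first by rewrite !mul0n.
rewrite !mulSn; apply: leq_trans (Aint_super _ _); by rewrite leq_add2l.
Qed.

Lemma Aint_lower n m : 0 < m -> (n - m) * Aint m <= Aint n * m.
Proof.
move=> Hm.
have H1 : n %/ m * Aint m <= Aint n.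
  rewrite {2}(divn_eq n m); apply: leq_trans (Aint_mul _ _) _.
  apply: leq_trans (Aint_super _ _); exact: leq_addr.
have H2 : n - m <= n %/ m * m.
  have := divn_eq n m; have := ltn_pmod n Hm; move: (n %/ m * m) (n %% m) => q r; lia.
apply: leq_trans (_ : n %/ m * m * Aint m <= _).
  by rewrite leq_mul2r H2 orbT.
by rewrite mulnAC leq_mul2r H1 orbT.
Qed.

Lemma Aint_bound n : 0 < n -> Aint n <= 4 * n.
Proof. move=> Hn; apply: leq_trans (Aint_rho n) _; apply: leq_trans (rho_upper n) _; lia. Qed.

Lemma exp_dom K t : 2 * K + 1 <= t -> K * t.+1 <= 2 ^ t.
Proof.
elim: t => [|t IH] Ht; first lia.
case: (eqVneq t (2 * K)) => [Et|Et].
- subst t; have h := ltn_expl K (isT : 1 < 2).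
  have -> : 2 ^ (2 * K).+1 = 2 * (2 ^ K * 2 ^ K) by rewrite expnS -expnD addnn -mul2n.
  move: h; move: (2 ^ K) => x h; nia.
- have := IH ltac:(lia); rewrite expnS; move: (2 ^ t) => x; nia.
Qed.

Lemma log_gadget K : exists N0, forall n, N0 <= n -> exists c, n < 2 ^ c /\ K * c <= n.
Proof.
exists (2 ^ (2 * K + 1)) => n Hn.
have Hn0 : 0 < n by apply: leq_trans Hn; rewrite expn_gt0.
exists (trunc_log 2 n).+1; split; first exact: trunc_log_ltn.
have H1 := trunc_log_ltn n (isT : 1 < 2).
have H2 := trunc_logP (isT : 1 < 2) Hn0.
have H3 : 2 * K + 1 <= trunc_log 2 n.
  have : 2 ^ (2 * K + 1) < 2 ^ (trunc_log 2 n).+1 by apply: leq_ltn_trans Hn H1.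
  by rewrite ltn_exp2l.
apply: leq_trans (exp_dom H3) H2.
Qed.

Unset Implicit Arguments.
Open Scope R_scope.

Lemma div_le_iff x y z : 0 < y -> (x / y <= z <-> x <= z * y).
Proof.
move=> Hy; split => H.
- have E : x = (x / y) * y by field; lra.
  rewrite E; apply: Rmult_le_compat_r; lra.
- have E : x / y = x * / y by [].
  have Hy' : 0 < / y by apply: Rinv_0_lt_compat.
  rewrite E; have -> : z = z * y * / y by field; lra.
  apply: Rmult_le_compat_r; lra.
Qed.

Lemma div_lt_iff x y z : 0 < y -> (z < x / y <-> z * y < x).
Proof.
move=> Hy; split => H.
- have E : x = (x / y) * y by field; lra.
  rewrite E; apply: Rmult_lt_compat_r; lra.
- have Hy' : 0 < / y by apply: Rinv_0_lt_compat.
  have -> : z = z * y * / y by field; lra.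
  apply: Rmult_lt_compat_r; lra.
Qed.

Lemma div_lt_iff2 x y z : 0 < y -> (x / y < z <-> x < z * y).
Proof.
move=> Hy; split => H.
- have E : x = (x / y) * y by field; lra.
  rewrite E; apply: Rmult_lt_compat_r; lra.
- have Hy' : 0 < / y by apply: Rinv_0_lt_compat.
  have -> : z = z * y * / y by field; lra.
  apply: Rmult_lt_compat_r; lra.
Qed.

Lemma INR_le {m n : nat} : (m <= n)%nat -> INR m <= INR n.
Proof. by move=> /leP; apply: le_INR. Qed.

Lemma INR_pos {n : nat} : (0 < n)%nat -> 0 < INR n.
Proof. by move=> /ltP; apply: lt_0_INR. Qed.

Lemma INR_mul (m n : nat) : INR (m * n)%nat = INR m * INR n.
Proof. by rewrite -multE mult_INR. Qed.

Lemma INR_add (m n : nat) : INR (m + n)%nat = INR m + INR n.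
Proof. by rewrite -plusE plus_INR. Qed.

Lemma INR_sub (m n : nat) : (n <= m)%nat -> INR (m - n)%nat = INR m - INR n.
Proof. by move=> /leP H; rewrite -minusE minus_INR. Qed.

Lemma INR4 : INR 4 = 4.
Proof. simpl; lra. Qed.

Theorem mainTheorem2 :
  exists l : R, Un_cv (fun n : nat => INR (rho (S n)) / INR (S n)) l.
Proof.
pose a n := INR (Aint n).
pose E x := exists N, x = a (S N) / INR (S N).
have Hpos : forall N, 0 < INR (S N) by move=> N; apply: INR_pos.
have Ha4 : forall N, a (S N) <= 4 * INR (S N).
  move=> N; rewrite /a; have := INR_le (Aint_bound (n := S N) isT).
  by rewrite INR_mul INR4.
have Hb : bound E.
  exists 4 => x [N ->]; apply/div_le_iff => //; exact: Ha4.
have He : exists x, E x by exists (a 1%nat / INR 1); exists 0%nat.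
have [L [HLub HLleast]] := @completeness E Hb He.
have U1 : forall N, a (S N) <= L * INR (S N).
  move=> N; apply/div_le_iff => //; apply: HLub; by exists N.
have U2 : forall e, 0 < e -> exists M, L - e < a (S M) / INR (S M).
  move=> e He0; apply: NNPP => Hn.
  have : L <= L - e; last lra.
  apply: HLleast => x [N ->]; apply: Rnot_lt_le => H; apply: Hn; by exists N.
have HL4 : L <= 4 by apply: HLleast => x [N ->]; apply/div_le_iff => //; exact: Ha4.
have HL0 : 0 <= L.
  have : a 1%nat / INR 1 <= L by apply: HLub; exists 0%nat.
  have : 0 <= a 1%nat / INR 1 by rewrite /a /Rdiv; apply: Rmult_le_pos; [apply: pos_INR|left; apply: Rinv_0_lt_compat; apply: (Hpos 0%nat)].
  lra.
exists L => eps Heps.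
have [M HM] := U2 (eps / 2) ltac:(lra).
have [K [HK HK0]] := archimed_cor1 (eps / 8) ltac:(lra).
have [N0 HN0] := log_gadget K.
exists (N0 + K * (S M))%nat => n /leP Hn.
rewrite /R_dist.
have [c [Hc1 Hc2]] := HN0 n.+1 ltac:(lia).
have Hr1 : (rho n.+1 <= Aint (n.+1 + c))%nat := rho_Aint Hc1.
have Hr2 : (Aint n.+1 <= rho n.+1)%nat := Aint_rho _.
have Hr3 := Aint_lower n.+1 (isT : (0 < S M)%nat).
have Hr4 : (S M <= n.+1)%nat.
  have : (S M <= K * S M)%nat by rewrite leq_pmull //; apply/ltP.
  lia.
set X := INR n.+1. set Y := INR (S M). set C := INR c. set Kr := INR K.
set r := INR (rho n.+1).
have HX : 0 < X by apply: INR_pos.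
have HY : 0 < Y by apply: INR_pos.
have HKr : 0 < Kr by apply: INR_pos; apply/ltP.
have HC0 : 0 <= C by apply: pos_INR.
have R1 : r <= L * (X + C).
  apply: Rle_trans (INR_le Hr1) _.
  have := U1 (n + c)%nat; rewrite /a.
  have -> : S (n + c) = (n.+1 + c)%nat by lia.
  by rewrite INR_add.
have R2 : a n.+1 <= r by apply: INR_le.
have R3 : (X - Y) * a (S M) <= a n.+1 * Y.
  have := INR_le Hr3; rewrite !INR_mul INR_sub //.
have R4 : a (S M) <= 4 * Y by apply: Ha4.
have R5 : Kr * C <= X by have := INR_le Hc2; rewrite INR_mul.
have R6 : Kr * Y <= X.
  have : (K * S M <= n.+1)%nat by lia.
  by move=> /INR_le; rewrite INR_mul.
have R7 : 8 < Kr * eps.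
  have := HK; rewrite -/Kr => H.
  have : 1 < Kr * (eps / 8).
    have E1 : 1 = Kr * / Kr by field; lra.
    rewrite {1}E1; apply: Rmult_lt_compat_l => //.
  lra.
have R8 : (L - eps / 2) * Y < a (S M) by apply/div_lt_iff.
apply: Rabs_def1.
-
  have Hup : r < (L + eps) * X.
    have H1 : L * C * Kr <= L * X.
      rewrite Rmult_assoc; apply: Rmult_le_compat_l => //; lra.
    have H2 : L * X <= 4 * X by apply: Rmult_le_compat_r; lra.
    have H3 : 4 * X < eps / 2 * X * Kr.
      have : 8 * X < Kr * eps * X by apply: Rmult_lt_compat_r.
      lra.
    have H4 : L * C < eps / 2 * X.
      apply: (Rmult_lt_reg_r Kr) => //; lra.
    nra.
  have : r / X < L + eps by apply/div_lt_iff2.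
  lra.
- have H1 : X * ((L - eps / 2) * Y) < X * a (S M) by apply: Rmult_lt_compat_l.
  have H2 : Y * a (S M) <= Y * (4 * Y) by apply: Rmult_le_compat_l; lra.
  have H3 : (X * (L - eps / 2) - 4 * Y) * Y < a n.+1 * Y by nra.
  have H4 : X * (L - eps / 2) - 4 * Y < a n.+1 by apply: (Rmult_lt_reg_r Y).
  have H5 : 8 * Y < X * eps.
    have : Kr * Y * eps <= X * eps by apply: Rmult_le_compat_r; lra.
    have : 8 * Y < Kr * eps * Y by apply: Rmult_lt_compat_r.
    nra.
  have : L - eps < r / X by apply/div_lt_iff => //; nra.
  lra.
Qed.
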